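(* There is a universal constant $c>0$ such that for all integers $n,d$ with $2\le d\le n/2$, the optimal MLSI constant $\alpha=\sup_{f>0\ \text{non-constant}}\frac{{\rm Ent}_{\pi_u}(f)}{\mathcal E_{\pi_u}(f,\log f)}$ of $(\Omega^B_n(d),\pi_u,Q_u)$ satisfies $\alpha\ge c\,nd$.
   Context: $\Omega^B_n(d)$ is the set of all simple bipartite $d$-regular graphs on $[n^{(\ell)}]\sqcup[n^{(r)}]$ with uniform distribution $\pi_u$. A simple switching of $G$ picks two edges $(i_1,j_1),(i_2,j_2)$ with $i_1\ne i_2$, $j_1\ne j_2$, deletes them and adds $(i_1,j_2),(i_2,j_1)$, provided the result is simple; $\mathcal N(G)$ is the set of graphs so obtainable. $Q_u(G_1,G_2)=(nd(nd-1)/2)^{-1}$ if $G_2\in\mathcal N(G_1)$, $Q_u(G_1,G_1)=-|\mathcal N(G_1)|/(nd(nd-1)/2)$, else $0$. ${\rm Ent}_\pi(f)=\mathbb E_\pi[f(\log f-\log\mathbb E_\pi f)]$, $\mathcal E_\pi(f,\log f)=\frac12\sum_{G,G'}\pi(G)Q(G,G')(f(G)-f(G'))\log\frac{f(G)}{f(G')}$. *)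

(* Defs.v *)
From HB Require Import structures.
From mathcomp Require Import all_boot all_order all_algebra.
From mathcomp Require Import all_classical all_reals all_analysis.
From mathcomp Require Import Rstruct.

Set Implicit Arguments.
Unset Strict Implicit.
Unset Printing Implicit Defensive.

Import Order.TTheory GRing.Theory Num.Theory.
Local Open Scope ring_scope.

(* A simple bipartite graph on [n^(l)] ⊔ [n^(r)] is its edge set E ⊆ [n]×[n]
   ((i,j) ∈ E means left vertex i is adjacent to right vertex j). *)
Definition deg_left (n : nat) (E : {set 'I_n * 'I_n}) (i : 'I_n) : nat :=
  #|[set j : 'I_n | (i, j) \in E]|.
Definition deg_right (n : nat) (E : {set 'I_n * 'I_n}) (j : 'I_n) : nat :=
  #|[set i : 'I_n | (i, j) \in E]|.
Definition is_dreg_bip (n d : nat) (E : {set 'I_n * 'I_n}) : bool :=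
  [forall i : 'I_n, deg_left E i == d] && [forall j : 'I_n, deg_right E j == d].

Definition OmegaB (n d : nat) := {E : {set 'I_n * 'I_n} | @is_dreg_bip n d E}.

Definition switch_rel (n d : nat) (G1 G2 : OmegaB n d) : bool :=
  [exists i1 : 'I_n, exists i2 : 'I_n, exists j1 : 'I_n, exists j2 : 'I_n,
    [&& i1 != i2, j1 != j2, (i1, j1) \in val G1, (i2, j2) \in val G1,
        (i1, j2) \notin val G1, (i2, j1) \notin val G1 &
        val G2 == ((val G1 :\ (i1, j1)) :\ (i2, j2)) :|: [set (i1, j2); (i2, j1)]]].

Definition nbhd (n d : nat) (G : OmegaB n d) : {set OmegaB n d} :=
  [set G' | switch_rel G G'].

Definition pi_u {R : realType} (n d : nat) (G : OmegaB n d) : R :=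
  1 / #|{: OmegaB n d}|%:R.

Definition Q_u {R : realType} (n d : nat) (G1 G2 : OmegaB n d) : R :=
  let N : R := ((n * d) * (n * d - 1))%:R / 2 in
  if G1 == G2 then - (#|nbhd G1|%:R) / N
  else if G2 \in nbhd G1 then 1 / N else 0.

Definition Exp_pi {R : realType} (n d : nat) (f : OmegaB n d -> R) : R :=
  \sum_(G : OmegaB n d) pi_u G * f G.

Definition Ent_pi {R : realType} (n d : nat) (f : OmegaB n d -> R) : R :=
  \sum_(G : OmegaB n d) pi_u G * (f G * (ln (f G) - ln (Exp_pi f))).

Definition Dir_pi {R : realType} (n d : nat) (f : OmegaB n d -> R) : R :=
  2^-1 * \sum_(G : OmegaB n d) \sum_(G' : OmegaB n d)
     pi_u G * Q_u G G' * (f G - f G') * (ln (f G) - ln (f G')).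

Definition pos_nonconst {R : realType} (n d : nat) : set (OmegaB n d -> R) :=
  [set f | (forall G, 0 < f G) /\ exists G1 G2, f G1 != f G2].

Definition alpha_MLSI {R : realType} (n d : nat) : \bar R :=
  ereal_sup [set ((Ent_pi f / Dir_pi f)%:E : \bar R) | f in @pos_nonconst R n d].

(* Main.v *)
Require Import Defs.
From HB Require Import structures.
From mathcomp Require Import all_boot all_order all_algebra.
From mathcomp Require Import all_classical all_reals all_analysis.
From mathcomp Require Import Rstruct.
Import Order.TTheory GRing.Theory Num.Theory.
Set Implicit Arguments. Unset Strict Implicit. Unset Printing Implicit Defensive.

Ltac btauto := repeat match goal with
  | |- context[?x == ?y] => case: (x == y)
  | |- context[?x \in ?y] => case: (x \in y)
  end.

Lemma card_swap1 (T : finType) (A : {set T}) x y :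
  y \in A -> x \notin A -> #|x |: (A :\ y)| = #|A|.
Proof.
move=> yA xA; rewrite cardsU1 (cardsD1 y A) yA !inE.
by rewrite (negbTE xA) andbF.
Qed.

Definition swE n (E : {set 'I_n * 'I_n}) i1 i2 j1 j2 :=
  ((E :\ (i1, j1)) :\ (i2, j2)) :|: [set (i1, j2); (i2, j1)].

Lemma swE_reg n d (E : {set 'I_n * 'I_n}) i1 i2 j1 j2 :
  is_dreg_bip d E -> i1 != i2 -> j1 != j2 -> (i1, j1) \in E -> (i2, j2) \in E ->
  (i1, j2) \notin E -> (i2, j1) \notin E -> is_dreg_bip d (swE E i1 i2 j1 j2).
Proof.
move=> /andP[/forallP hl /forallP hr] hi hj e1 e2 e3 e4.
have hi' : (i1 == i2) = false by apply/negbTE.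
have hi'' : (i2 == i1) = false by rewrite eq_sym hi'.
have hj' : (j1 == j2) = false by apply/negbTE.
have hj'' : (j2 == j1) = false by rewrite eq_sym hj'.
apply/andP; split; apply/forallP => k.
- rewrite -(eqP (hl k)) /deg_left.
  have [->|k1] := eqVneq k i1.
    apply/eqP; rewrite -(@card_swap1 _ [set j | (i1, j) \in E] j2 j1) ?inE //.
    apply: eq_card => j; rewrite /swE !inE !xpair_eqE /= eqxx hi' /=.
    by btauto.
  have [->|k2] := eqVneq k i2.
    apply/eqP; rewrite -(@card_swap1 _ [set j | (i2, j) \in E] j1 j2) ?inE //.
    apply: eq_card => j; rewrite /swE !inE !xpair_eqE /= eqxx hi'' /=.
    by btauto.
  apply/eqP; apply: eq_card => j; rewrite /swE !inE !xpair_eqE /= (negbTE k1) (negbTE k2) /=.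
  by btauto.
- rewrite -(eqP (hr k)) /deg_right.
  have [->|k1] := eqVneq k j1.
    apply/eqP; rewrite -(@card_swap1 _ [set j | (j, j1) \in E] i2 i1) ?inE //.
    apply: eq_card => j; rewrite /swE !inE !xpair_eqE /= eqxx hj' /=.
    by btauto.
  have [->|k2] := eqVneq k j2.
    apply/eqP; rewrite -(@card_swap1 _ [set j | (j, j2) \in E] i1 i2) ?inE //.
    apply: eq_card => j; rewrite /swE !inE !xpair_eqE /= eqxx hj'' /=.
    by btauto.
  apply/eqP; apply: eq_card => j; rewrite /swE !inE !xpair_eqE /= (negbTE k1) (negbTE k2) /=.
  by btauto.
Qed.
Ltac fin := repeat match goal with
 | H : is_true (~~ (@eq_op _ ?x ?x)) |- _ => by rewrite eqxx in H
 | H : is_true (~~ (@eq_op _ ?x ?y)) |- _ =>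
     let H' := fresh in
     (have H' : (y == x) = false by (rewrite eq_sym; exact: negbTE H));
     rewrite ?(negbTE H) ?H'; clear H H'
 | H : is_true (~~ (in_mem ?p ?A)) |- _ => rewrite ?(negbTE H); clear H
 | H : is_true (in_mem ?p ?A) |- _ => rewrite ?H; clear H
 end; rewrite ?eqxx /=; btauto; done.

Definition swdata n (E : {set 'I_n * 'I_n}) (i1 i2 j1 j2 : 'I_n) :=
  [&& i1 != i2, j1 != j2, (i1, j1) \in E, (i2, j2) \in E,
        (i1, j2) \notin E & (i2, j1) \notin E].

Lemma switch_relP n d (G G' : OmegaB n d) :
  switch_rel G G' = [exists i1, exists i2, exists j1, exists j2,
     swdata (val G) i1 i2 j1 j2 && (val G' == swE (val G) i1 i2 j1 j2)].
Proof.
apply/idP/idP.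
- case/existsP => i1 /existsP[i2 /existsP[j1 /existsP[j2 /and5P[a b c e /and3P[f g h]]]]].
  apply/existsP; exists i1; apply/existsP; exists i2; apply/existsP; exists j1; apply/existsP; exists j2.
  by rewrite /swdata a b c e f g h.
- case/existsP => i1 /existsP[i2 /existsP[j1 /existsP[j2 /andP[/and5P[a b c e /andP[f g]] h]]]].
  apply/existsP; exists i1; apply/existsP; exists i2; apply/existsP; exists j1; apply/existsP; exists j2.
  by rewrite a b c e f g h.
Qed.

Lemma swE_inv n (E : {set 'I_n * 'I_n}) i1 i2 j1 j2 :
  swdata E i1 i2 j1 j2 ->
  swdata (swE E i1 i2 j1 j2) i1 i2 j2 j1 /\ E = swE (swE E i1 i2 j1 j2) i1 i2 j2 j1.
Proof.
case/and5P => hi hj e1 e2 /andP[e3 e4].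
split.
  apply/and5P; split => //; first by rewrite eq_sym.
  - by rewrite /swE !inE !xpair_eqE !eqxx /= ?orbT.
  - by rewrite /swE !inE !xpair_eqE !eqxx /= ?orbT ?andbT.
  - rewrite /swE !inE !xpair_eqE !eqxx /=; fin.
apply/setP => -[u v]; rewrite /swE !inE !xpair_eqE.
case: (eqVneq u i1) => ?; case: (eqVneq u i2) => ?;
case: (eqVneq v j1) => ?; case: (eqVneq v j2) => ?; subst; fin.
Qed.

Lemma switch_sym n d (G G' : OmegaB n d) : switch_rel G G' -> switch_rel G' G.
Proof.
rewrite !switch_relP.
case/existsP => i1 /existsP[i2 /existsP[j1 /existsP[j2 /andP[sd /eqP h]]]].
have [sd' eqE] := swE_inv sd.
apply/existsP; exists i1; apply/existsP; exists i2; apply/existsP; exists j2; apply/existsP; exists j1.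
by rewrite h sd' -eqE eqxx.
Qed.

Lemma swE_comm n (E : {set 'I_n * 'I_n}) i1 i2 j1 j2 :
  swE E i1 i2 j1 j2 = swE E i2 i1 j2 j1.
Proof. apply/setP => x; rewrite /swE !inE; btauto; done. Qed.

Lemma sum_bool_card (T : finType) (P : pred T) :
  (\sum_(x : T) (P x : nat) = #|[set x | P x]|)%N.
Proof.
rewrite -sum1_card [RHS]big_mkcond /=; apply: eq_bigr => x _; rewrite inE; by case: (P x).
Qed.

Lemma card_rows n (E : {set 'I_n * 'I_n}) :
  #|E| = (\sum_(i : 'I_n) #|[set j | (i, j) \in E]|)%N.
Proof.
transitivity (\sum_(p : 'I_n * 'I_n) ((p.1, p.2) \in E : nat))%N.
  rewrite sum_bool_card; apply: eq_card => p; rewrite inE -surjective_pairing //.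
rewrite -(pair_bigA _ (fun i j => ((i, j) \in E : nat))) /=; apply: eq_bigr => i _; exact: sum_bool_card.
Qed.

Lemma card_edges n d (G : OmegaB n d) : #|val G| = (n * d)%N.
Proof.
case: G => E /= /andP[/forallP hl _].
rewrite card_rows (eq_bigr (fun _ => d)); last by move=> i _; exact: (eqP (hl i)).
by rewrite sum_nat_const card_ord.
Qed.

Lemma card_N6 n d (G : OmegaB n d) a b : (a, b) \in val G ->
  (#|[set G' : OmegaB n d | ((a, b) \notin val G') && switch_rel G G']| <= n * d)%N.
Proof.
move=> abG.
rewrite -(card_edges G) -(card_imset _ val_inj).
apply: leq_trans (leq_imset_card (fun x => swE (val G) a x.1 b x.2) (val G)).
apply: subset_leq_card; apply/fintype.subsetP => _ /imsetP[G' + ->]; rewrite inE => /andP[abG'].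
rewrite switch_relP => /existsP[i1 /existsP[i2 /existsP[j1 /existsP[j2 /andP[sd /eqP h]]]]].
move: (sd) => /and5P[hi hj e1 e2 /andP[e3 e4]].
have : ((a, b) == (i1, j1)) || ((a, b) == (i2, j2)).
  by move: abG'; rewrite h /swE !inE abG andbT; btauto.
rewrite h; case/orP => /eqP [-> ->].
- by apply/imsetP; exists (i2, j2).
- by apply/imsetP; exists (i1, j1) => //=; exact: swE_comm.
Qed.

Lemma card_N7 n d (G : OmegaB n d) a b : (a, b) \notin val G ->
  (#|[set G' : OmegaB n d | ((a, b) \in val G') && switch_rel G G']| <= d * d)%N.
Proof.
move=> abG.
have /andP[/forallP hl /forallP hr] := proj2_sig G.
rewrite -(card_imset _ val_inj).
have -> : (d * d = #|finset.setX [set j | (a, j) \in val G] [set i | (i, b) \in val G]|)%N.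
  by rewrite cardsX; congr (_ * _)%N; apply/esym; [exact: (eqP (hl a)) | exact: (eqP (hr b))].
apply: leq_trans (leq_imset_card (fun x => swE (val G) a x.2 x.1 b) _).
apply: subset_leq_card; apply/fintype.subsetP => _ /imsetP[G' + ->]; rewrite inE => /andP[abG'].
rewrite switch_relP => /existsP[i1 /existsP[i2 /existsP[j1 /existsP[j2 /andP[sd /eqP h]]]]].
move: (sd) => /and5P[hi hj e1 e2 /andP[e3 e4]].
have : ((a, b) == (i1, j2)) || ((a, b) == (i2, j1)).
  by move: abG'; rewrite h /swE !inE (negbTE abG) andbF; btauto.
rewrite h; case/orP => /eqP [-> ->].
- by apply/imsetP; exists (j1, i2) => //; rewrite !inE /= e1 e2.
- apply/imsetP; exists (j2, i1) => /=; last exact: swE_comm.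
  by rewrite !inE /= e1 e2.
Qed.
Definition Cr n d (A : {set OmegaB n d}) : nat :=
  (\sum_(G : OmegaB n d) \sum_(G' : OmegaB n d)
      ((G \in A) && (G' \notin A) && switch_rel G G' : nat))%N.

Lemma switch_symE n d (G G' : OmegaB n d) : switch_rel G G' = switch_rel G' G.
Proof. by apply/idP/idP; apply: switch_sym. Qed.

Lemma Cr_sym n d (A : {set OmegaB n d}) : Cr A = Cr (~: A).
Proof.
rewrite /Cr exchange_big /=; apply: eq_bigr => G _; apply: eq_bigr => G' _.
rewrite !inE negbK (switch_symE G' G); by case: (G \in A); case: (G' \in A).
Qed.

Lemma Cr_bound n d (A : {set OmegaB n d}) K :
  (forall G, G \in A -> #|[set G' | (G' \notin A) && switch_rel G G']| <= K)%N ->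
  (Cr A <= #|A| * K)%N.
Proof.
move=> hK; rewrite /Cr -sum_nat_const.
rewrite [X in (X <= _)%N](bigID (mem A)) /=.
rewrite [X in (_ + X)%N]big1 ?addn0; last first.
  by move=> G /negbTE GA; apply: big1 => G' _; rewrite GA.
apply: leq_sum => G GA; apply: leq_trans (hK G GA).
rewrite -(sum_bool_card (fun G' => (G' \notin A) && switch_rel G G')).
by apply: leq_sum => G' _; rewrite GA.
Qed.

Lemma Cr_pos n d (A : {set OmegaB n d}) G0 G1 :
  G0 \in A -> G1 \notin A -> switch_rel G0 G1 -> (0 < Cr A)%N.
Proof.
move=> h0 h1 s; rewrite /Cr (bigD1 G0) //=; apply: leq_trans (leq_addr _ _).
by rewrite (bigD1 G1) //= h0 h1 s.
Qed.
From mathcomp Require Import zify.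

Definition circ (m d : nat) : {set 'I_m.+2 * 'I_m.+2} :=
  [set x : 'I_m.+2 * 'I_m.+2 | (nat_of_ord (x.2 - x.1)%R < d)%N].

Lemma in_circ2 m d (i j : 'I_m.+2) : ((i, j) \in circ m d) = (nat_of_ord (j - i)%R < d)%N.
Proof. by rewrite inE. Qed.

Lemma card_lt N d : (d <= N)%N -> #|[set k : 'I_N | (val k < d)%N]| = d.
Proof.
move=> le; have inj : injective (widen_ord le) by move=> x y h; apply: val_inj; exact: (congr1 val h).
rewrite -[RHS]card_ord -(card_imset _ inj).
apply: eq_card => k; rewrite !inE; apply/idP/imsetP.
- by move=> kd; exists (Ordinal kd) => //; apply: val_inj.
- by case=> x _ ->; apply: (ltn_ord x).
Qed.

Lemma circ_reg m d : (d <= m.+2)%N -> is_dreg_bip d (circ m d).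
Proof.
move=> le; apply/andP; split; apply/forallP => i.
- rewrite /deg_left -[X in _ == X](card_lt le); apply/eqP.
  rewrite -(card_preimset [set k : 'I_m.+2 | (val k < d)%N] (addIr (- i)%R)).
  by apply: eq_card => j; rewrite !inE.
- rewrite /deg_right -[X in _ == X](card_lt le); apply/eqP.
  have inj : injective (fun j : 'I_m.+2 => (i - j)%R).
    by move=> x y /= h; apply: oppr_inj; apply: (addrI i).
  rewrite -(card_preimset [set k : 'I_m.+2 | (val k < d)%N] inj); apply: eq_card => j; by rewrite !inE.
Qed.

Lemma exists_switch m d : (2 <= d)%N -> (2 * d <= m.+2)%N ->
  exists G0 G1 : OmegaB m.+2 d,
    [/\ (ord0, ord0) \in val G0, (ord0, ord0) \notin val G1 & switch_rel G0 G1].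
Proof.
move=> d2 dn.
have ltd : (d < m.+2)%N by apply: leq_trans dn; rewrite mul2n -addnn -addn1 leq_add2l (leq_trans _ d2).
have z0 : (0%R : 'I_m.+2) = ord0 by apply: val_inj.
have vd : val ((d%:R)%R : 'I_m.+2) = d by rewrite Zp_nat /= modn_small.
have vd1 : val (((d%:R)%R : 'I_m.+2) - 1)%R = d.-1.
  rewrite -[X in (_ - X)%R]/(1%:R)%R -natrB ?(ltnW d2) //.
  by rewrite Zp_nat /= subn1 modn_small // (leq_ltn_trans (leq_pred d)).
have vm1 : val (- (1 : 'I_m.+2))%R = m.+1 by rewrite /= modn_small.
have reg0 := circ_reg (ltnW ltd).
have sd : swdata (circ m d) 0%R 1%R 0%R (d%:R)%R.
  apply/and5P; split.
  - by rewrite eq_sym oner_eq0.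
  - by apply/eqP => /(congr1 val); rewrite vd /= => h; move: d2; rewrite -h.
  - by rewrite inE subrr; apply: leq_trans d2.
  - by rewrite in_circ2 vd1 ltn_predL (leq_trans _ d2).
  - rewrite !in_circ2 subr0 vd ltnn /= !modn_small ?add0n //. lia.
pose G0 : OmegaB m.+2 d := exist _ (circ m d) reg0.
have reg1 : is_dreg_bip d (swE (circ m d) 0%R 1%R 0%R (d%:R)%R).
  by case/and5P: sd => a b c e /andP[f g]; apply: swE_reg.
pose G1 : OmegaB m.+2 d := exist (fun E => is_dreg_bip d E) _ reg1.
exists G0, G1; split.
- by rewrite /= -z0 in_circ2 subrr; apply: leq_trans d2.
- by case/and5P: (sd) => a b _ _ _; rewrite /= -z0 /swE !inE !xpair_eqE !eqxx (negbTE a) (negbTE b) /=.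
- rewrite switch_relP; apply/existsP; exists 0%R; apply/existsP; exists 1%R;
  apply/existsP; exists 0%R; apply/existsP; exists (d%:R)%R.
  by rewrite sd eqxx.
Qed.
From mathcomp Require Import ring lra.
Section An.
Variable R : realType.
Local Open Scope ring_scope.

Lemma sum_if (T : finType) (A : {set T}) (x y : R) :
  \sum_(G : T) (if G \in A then x else y) = #|A|%:R * x + #|~:A|%:R * y.
Proof.
rewrite (bigID (mem A)) /=.
rewrite (eq_bigr (fun _ => x)); last by move=> i ->.
rewrite [X in _ + X](eq_bigr (fun _ => y)); last by move=> i /negbTE ->.
rewrite [X in _ + X](eq_bigl (fun i => i \in ~: A)); last by move=> i; rewrite inE.
by rewrite !sumr_const !mulr_natl.
Qed.

Variables (n d : nat) (A : {set OmegaB n d}) (b : R).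
Hypothesis b0 : 0 < b.
Let f : OmegaB n d -> R := fun G => if G \in A then b else 1.
Let Mr : R := #|{: OmegaB n d}|%:R.
Let Nr : R := ((n * d) * (n * d - 1))%:R / 2.

Lemma Exp_form : Exp_pi f = (#|A|%:R * b + #|~:A|%:R) / Mr.
Proof.
rewrite /Exp_pi (eq_bigr (fun G => Mr^-1 * f G)); last by move=> G _; rewrite /pi_u div1r.
rewrite -mulr_sumr /f sum_if mulr1 mulrC //.
Qed.

Lemma Ent_form : Ent_pi f =
  (#|A|%:R * (b * (ln b - ln (Exp_pi f))) + #|~:A|%:R * (- ln (Exp_pi f))) / Mr.
Proof.
rewrite /Ent_pi (eq_bigr (fun G => Mr^-1 *
   (if G \in A then b * (ln b - ln (Exp_pi f)) else - ln (Exp_pi f)))).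
  by rewrite -mulr_sumr sum_if mulrC.
move=> G _; rewrite /pi_u div1r /f; case: (G \in A) => //.
by rewrite ln1 mul1r sub0r.
Qed.

Lemma Dir_term G G' :
  pi_u G * Q_u G G' * (f G - f G') * (ln (f G) - ln (f G')) =
  Mr^-1 / Nr * ((1 - b) * (- ln b)) *
  (((G \in A) && (G' \notin A) && switch_rel G G') +
   ((G \in ~:A) && (G' \notin ~:A) && switch_rel G G'))%:R.
Proof.
rewrite /Q_u /pi_u /f -/Nr -/Mr; case: eqVneq => [<-|ne].
  by rewrite subrr mulr0 mul0r !inE; case: (G \in A); rewrite /= ?mulr0.
rewrite /nbhd inE !inE.
case: (switch_rel G G'); case: (G \in A); case: (G' \in A); rewrite /= ?ln1 ?mulr0 ?mul0r ?subrr //; ring.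
Qed.

Lemma Dir_form : Dir_pi f = 2^-1 * (Mr^-1 / Nr * ((1 - b) * (- ln b))) * (Cr A + Cr (~: A))%:R.
Proof.
rewrite /Dir_pi -mulrA; congr (_ * _).
have -> : (Cr A + Cr (~:A) = \sum_(G : OmegaB n d) \sum_(G' : OmegaB n d)
  (((G \in A) && (G' \notin A) && switch_rel G G') +
   ((G \in ~:A) && (G' \notin ~:A) && switch_rel G G')))%N.
  by rewrite /Cr -big_split; apply: eq_bigr => G _; rewrite -big_split.
rewrite natr_sum mulr_sumr; apply: eq_bigr => G _.
rewrite natr_sum mulr_sumr; apply: eq_bigr => G' _; exact: Dir_term.
Qed.

End An.
Local Open Scope ring_scope.
Lemma key (R : realType) (a Mr kr cr b lnm : R) :
  1 <= a -> 2 * a <= Mr -> 2 <= kr -> 1 <= cr -> cr <= a * kr -> 0 < b -> b <= 1/5 ->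
  lnm <= (a * b + (Mr - a)) / Mr - 1 ->
  1/160 * kr <= ((a * (b * (-2 - lnm)) + (Mr - a) * (- lnm)) / Mr) /
     (2^-1 * (Mr^-1 / (kr * (kr - 1) / 2) * ((1 - b) * 2)) * (cr + cr)).
Proof.
move=> a1 aM k2 c1 ca b0 b5 hl.
have Mr0 : 0 < Mr by lra.
have k1 : 0 < kr - 1 by lra.
have -> : 2^-1 * (Mr^-1 / (kr * (kr - 1) / 2) * ((1 - b) * 2)) * (cr + cr)
   = (1 - b) * cr * 4 / (Mr * kr * (kr - 1)).
  field; lra.
set r := a / Mr.
have ar : a = r * Mr by rewrite /r divfK // gt_eqF.
have r0 : 0 < r by rewrite /r divr_gt0 //; lra.
have r2 : r <= 1/2.
  by rewrite /r ler_pdivrMr //; lra.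
have -> : (a * (b * (-2 - lnm)) + (Mr - a) * (- lnm)) / Mr = r * (b * (-2 - lnm)) + (1 - r) * (- lnm).
  rewrite ar; field; lra.
have hl' : lnm <= - r * (1 - b).
  move: hl; rewrite ar; have -> : (r * Mr * b + (Mr - r * Mr)) / Mr - 1 = - r * (1 - b) by field; lra.
  done.
have E1 : r / 20 <= r * (b * (-2 - lnm)) + (1 - r) * (- lnm).
  have h1 : 0 <= r * b + 1 - r by nra.
  have s1 : (r * b + 1 - r) * (r * (1 - b)) <= (r * b + 1 - r) * (- lnm).
    by apply: ler_wpM2l => //; lra.
  have s2 : (1 + b) / 2 <= 1 - r * (1 - b) by nra.
  have s3 : (1 + b) / 2 * (1 - b) <= (1 - r * (1 - b)) * (1 - b).
    by apply: ler_wpM2r => //; lra.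
  have s4 : 1 / 20 <= -2 * b + (1 - r * (1 - b)) * (1 - b) by nra.
  have s5 : r * (1 / 20) <= r * (-2 * b + (1 - r * (1 - b)) * (1 - b)).
    by apply: ler_wpM2l => //; lra.
  have -> : r * (b * (-2 - lnm)) + (1 - r) * (- lnm) = -2 * r * b + (r * b + 1 - r) * (- lnm) by ring.
  nra.
rewrite ler_pdivlMr; last first.
  apply: divr_gt0; first nra.
  apply: mulr_gt0 => //; nra.
apply: le_trans E1.
have -> : 1 / 160 * kr * ((1 - b) * cr * 4 / (Mr * kr * (kr - 1))) = (1 - b) * cr / (40 * Mr * (kr - 1)).
  field; lra.
rewrite ler_pdivrMr; last nra.
rewrite ar in ca.
nra.
Qed.
Local Open Scope ring_scope.

Lemma b_le (R : realType) : expR (-2) <= 1/5 :> R.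
Proof.
rewrite expRN.
have h : (3/2)^+4 <= expR 2 :> R.
  have -> : expR 2 = expR (1/2) ^+ 4 :> R.
    by rewrite -expRM_natl; congr expR; field.
  apply: lerXn2r; rewrite ?nnegrE ?expR_ge0 //.
  apply: le_trans (expR_ge1Dx _); lra.
rewrite -[X in _ <= X]invrK lef_pV2 ?posrE; first (apply: le_trans h; lra).
- exact: expR_gt0.
- lra.
Qed.

Lemma core (R : realType) n d (A : {set OmegaB n d}) (G0 G1 : OmegaB n d) :
  (2 <= n * d)%N -> G0 \in A -> G1 \notin A -> (2 * #|A| <= #|{: OmegaB n d}|)%N ->
  (0 < Cr A)%N -> (Cr A <= #|A| * (n * d))%N -> Cr (~: A) = Cr A ->
  (((1/160 : R) * (n * d)%:R)%:E <= @alpha_MLSI R n d)%E.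
Proof.
move=> K2 h0 h1 hM c0 cK csym.
pose b : R := expR (-2).
have b0 : 0 < b := expR_gt0 _.
have b5 : b <= 1/5 := b_le R.
have lnb : ln b = -2 by rewrite /b expRK.
pose f := fun G : OmegaB n d => if G \in A then b else 1.
have fpos : @pos_nonconst R n d f.
  split; first by move=> G; rewrite /f; case: (G \in A) => //; lra.
  exists G0, G1; rewrite /f h0 (negbTE h1); apply/eqP; lra.
apply: (le_trans _ (@ereal_sup_ubound _ _ ((Ent_pi f / Dir_pi f)%:E) _)); last by exists f.
rewrite lee_fin.
have a1 : (1 <= #|A|)%N by apply/card_gt0P; exists G0.
have cardC : #|~: A| = (#|{: OmegaB n d}| - #|A|)%N.
  by rewrite -(cardsC A) addKn.
have aM : (#|A| <= #|{: OmegaB n d}|)%N by rewrite -(cardsC A) leq_addr.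
rewrite (Dir_form A b) (Ent_form A b) (Exp_form A b) csym lnb.
rewrite cardC natrB // (@natrM R (n * d) (n * d - 1)) natrB ?(leq_trans _ K2) // natrD.
rewrite opprK.
apply: key.
- by rewrite ler1n.
- by rewrite -natrM ler_nat.
- by rewrite ler_nat.
- by rewrite ler1n.
- by rewrite -natrM ler_nat.
- exact: b0.
- exact: b5.
- set m := (_ / _).
  have aR : 1 <= #|A|%:R :> R by rewrite ler1n.
  have MR : 2 * #|A|%:R <= #|{: OmegaB n d}|%:R :> R by rewrite -natrM ler_nat.
  have m0 : 0 < m by rewrite /m; apply: divr_gt0; nra.
  have e : 1 + (m - 1) = m by ring.
  have := @le_ln1Dx R (m - 1); rewrite e; apply; lra.
Qed.

From mathcomp Require Import zify.

Theorem mainTheorem5 :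
  exists c : Rdefinitions.R, 0 < c /\
    forall n d : nat, (2 <= d)%N -> (2 * d <= n)%N ->
      ((c * (n * d)%:R)%:E <= @alpha_MLSI Rdefinitions.R n d)%E.
Proof.
exists (1/160); split; first lra.
move=> n d d2 dn.
have [m nm] : exists m, n = m.+2.
  case: n dn => [|[|m]] dn; try lia; by exists m.
subst n.
have [G0 [G1 [e0 e1 sw]]] := exists_switch d2 dn.
pose S := [set G : OmegaB m.+2 d | (ord0, ord0) \in val G].
have K2 : (2 <= m.+2 * d)%N by lia.
have S0 : G0 \in S by rewrite inE.
have S1 : G1 \notin S by rewrite inE.
have cS0 : (0 < Cr S)%N := Cr_pos S0 S1 sw.
have cSym : Cr S = Cr (~: S) := Cr_sym S.
have cSb : (Cr S <= #|S| * (m.+2 * d))%N.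
  apply: Cr_bound => G GS.
  have := card_N6 (G := G) (a := ord0) (b := ord0); rewrite inE in GS => /(_ GS).
  by apply: leq_trans; apply: subset_leq_card; apply/fintype.subsetP => G'; rewrite !inE.
have cCb : (Cr (~: S) <= #|~: S| * (m.+2 * d))%N.
  apply: Cr_bound => G GS.
  have := card_N7 (G := G) (a := ord0) (b := ord0); rewrite !inE in GS => /(_ GS) h.
  apply: leq_trans (leq_trans h _); last by nia.
  by apply: subset_leq_card; apply/fintype.subsetP => G'; rewrite !inE negbK.
have tot : (#|S| + #|~: S| = #|{: OmegaB m.+2 d}|)%N := cardsC S.
case: (leqP (2 * #|S|) #|{: OmegaB m.+2 d}|) => h.
- apply: (@core _ _ _ S G0 G1) => //.
- apply: (@core _ _ _ (~: S) G1 G0) => //.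
  + by rewrite inE.
  + by rewrite inE negbK.
  + by move: h; rewrite -tot !mul2n -!addnn ltn_add2l leq_add2r => /ltnW.
  + by rewrite -cSym.
  + by rewrite finset.setCK.
Qed.
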